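(* For all integers $r, k \geq 1$, we have $s_r(K_{k+1}) \geq P_r(k)$.
   Context: All graphs are finite and simple. For graphs $G,H$ and an integer $r\ge 1$, write $G \rightarrow (H)_r$ if every colouring of the edges of $G$ with $r$ colours contains a monochromatic copy of $H$. A graph $G$ is $r$-Ramsey-minimal for $H$ if $G \rightarrow (H)_r$ but no proper subgraph $G'\subsetneq G$ satisfies $G' \rightarrow (H)_r$. Define $s_r(H) := \min \delta(G)$ over all graphs $G$ that are $r$-Ramsey-minimal for $H$, where $\delta$ denotes minimum degree. A colour pattern on a vertex set $V$ is a sequence $G_1,\dots,G_r$ of pairwise edge-disjoint graphs all having vertex set $V$; it is $H$-free if no $G_i$ contains $H$ as a subgraph. Given a colour pattern $G_1,\dots,G_r$ on $V$ and a colouring $c: V \to [r]$, a strongly monochromatic $K_k$ is a set of $k$ vertices all receiving the same colour $i$ under $c$ and forming a clique in $G_i$. $P_r(k)$ is the smallest integer $n$ such that there exists a $K_{k+1}$-free colour pattern $G_1,\dots,G_r$ on an $n$-element vertex set $V$ such that every colouring $V \to [r]$ yields a strongly monochromatic $K_k$. *)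

(* Defs.v *)
From mathcomp Require Import all_boot.
Set Implicit Arguments. Unset Strict Implicit. Unset Printing Implicit Defensive.

(* A finite simple graph on a vertex set A : {set T} (T a finType) is given by
   an edge relation E : rel T that is symmetric and irreflexive and whose
   edges lie inside A.  A whole graph on T uses A = [set: T]. *)
Definition simple_rel (T : finType) (E : rel T) : Prop :=
  (forall x y, E x y = E y x) /\ (forall x, ~~ E x x).

Definition rel_on (T : finType) (A : {set T}) (E : rel T) : Prop :=
  forall x y, E x y -> (x \in A) && (y \in A).

Definition is_clique (T : finType) (E : rel T) (S : {set T}) : Prop :=
  forall x y, x \in S -> y \in S -> x != y -> E x y.

(* An r-edge-colouring of a graph assigns to each edge {x,y} (as the
   2-element set [set x; y]) a colour in 'I_r; it is given as a function on
   all of {set T}, only its values on edges matter. *)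
Definition arrows_clique (T : finType) (r k : nat) (A : {set T}) (E : rel T)
  : Prop :=
  forall c : {set T} -> 'I_r,
    exists (i : 'I_r) (S : {set T}),
      [/\ S \subset A, #|S| = k.+1 &
          forall x y, x \in S -> y \in S -> x != y ->
            E x y /\ c [set x; y] = i].

Definition subgraph (T : finType) (A' : {set T}) (E' : rel T)
  (A : {set T}) (E : rel T) : Prop :=
  [/\ simple_rel E', rel_on A' E', A' \subset A & forall x y, E' x y -> E x y].

Definition proper_subgraph (T : finType) (A' : {set T}) (E' : rel T)
  (A : {set T}) (E : rel T) : Prop :=
  subgraph A' E' A E /\ (A' != A \/ exists x y, E x y && ~~ E' x y).

Definition ramsey_minimal_clique (T : finType) (r k : nat) (E : rel T) : Prop :=
  arrows_clique r k [set: T] E /\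
  forall (A' : {set T}) (E' : rel T),
    proper_subgraph A' E' [set: T] E -> ~ arrows_clique r k A' E'.

Definition degree (T : finType) (E : rel T) (v : T) : nat := #|[set y | E v y]|.

Definition colour_pattern (r n : nat) (G : 'I_r -> rel 'I_n) : Prop :=
  (forall i, simple_rel (G i)) /\
  (forall i j x y, i != j -> G i x y -> ~~ G j x y).

Definition pattern_clique_free (r n m : nat) (G : 'I_r -> rel 'I_n) : Prop :=
  forall (i : 'I_r) (S : {set 'I_n}), #|S| = m -> ~ is_clique (G i) S.

Definition forces_strong_mono (r n k : nat) (G : 'I_r -> rel 'I_n) : Prop :=
  forall c : 'I_n -> 'I_r,
    exists (i : 'I_r) (S : {set 'I_n}),
      [/\ #|S| = k, (forall x, x \in S -> c x = i) & is_clique (G i) S].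

(* n is admissible in the definition of P_r(k); P_r(k) is the least such n. *)
Definition Pr_admissible (r k n : nat) : Prop :=
  exists G : 'I_r -> rel 'I_n,
    [/\ colour_pattern G, pattern_clique_free k.+1 G & forces_strong_mono k G].

(* Main.v *)
Require Import Defs.
From mathcomp Require Import all_boot.
From Stdlib Require Import Classical.

Theorem lemma2p1 (r k : nat) (hr : 0 < r) (hk : 0 < k)
  (T : finType) (E : rel T) (hE : simple_rel E)
  (hmin : ramsey_minimal_clique r k E) :
  forall v : T, exists2 n : nat, Pr_admissible r k n & n <= degree E v.
Proof.
move=> v; exists (degree E v) => //.
have [Esym Eirr] := hE.
have [harr hnot] := hmin.
pose A' := [set x : T | x != v].
pose E' := fun x y : T => [&& x != v, y != v & E x y].
have hE' : ~ arrows_clique r k A' E'.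
  apply: hnot; split; last by left; apply/eqP => /setP/(_ v); rewrite !inE eqxx.
  split.
  - split => [x y|x]; first by rewrite /E' Esym andbCA.
    by rewrite /E' (negbTE (Eirr x)) !andbF.
  - by move=> x y /and3P[hx hy _]; rewrite !inE hx hy.
  - exact: subsetT.
  - by move=> x y /and3P[].
have [c' hc'] : exists c' : {set T} -> 'I_r, forall (i : 'I_r) (S : {set T}),
    ~ [/\ S \subset A', #|S| = k.+1 &
          forall x y, x \in S -> y \in S -> x != y -> E' x y /\ c' [set x; y] = i].
  apply: NNPP => H; apply: hE' => c; apply: NNPP => H2; apply: H; exists c.
  by move=> i S HS; apply: H2; exists i, S.
pose N := [set y | E v y].
pose f := @enum_val T (mem N).
have fN : forall a, f a \in N by move=> a; exact: enum_valP.
have finj : injective f by exact: enum_val_inj.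
have fv : forall a, f a != v.
  by move=> a; apply/eqP => h; have := fN a; rewrite inE h (negbTE (Eirr v)).
pose i0 : 'I_r := Ordinal hr.
pose G := fun (i : 'I_r) (a b : 'I_#|N|) => E (f a) (f b) && (c' [set f a; f b] == i).
exists G; split.
- split.
  + move=> i; split => [a b|a]; first by rewrite /G Esym setUC.
    by rewrite /G (negbTE (Eirr _)).
  + move=> i j a b hij /andP[_ /eqP hi]; rewrite /G hi negb_and orbC.
    apply/orP; left; apply/eqP => hj; subst j; by rewrite eqxx in hij.
- move=> i S hS hcl; apply: (hc' i (f @: S)); split.
  + by apply/subsetP => x /imsetP[a _ ->]; rewrite inE fv.
  + by rewrite card_imset.
  + move=> x y /imsetP[a ha ->] /imsetP[b hb ->] hab.
    have hab' : a != b by apply: contraNneq hab => ->.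
    have /andP[he /eqP hc] := hcl a b ha hb hab'.
    by rewrite /E' !fv he.
- move=> c.
  pose cN := fun x : T => if [pick a | f a == x] is Some a then c a else i0.
  have cNf : forall a, cN (f a) = c a.
    move=> a; rewrite /cN; case: pickP => [b /eqP /finj -> //|].
    by move/(_ a); rewrite eqxx.
  pose c2 := fun S : {set T} => if v \in S then cN (odflt v [pick x in S :\ v])
                                 else c' S.
  have c2v : forall a, c2 [set v; f a] = c a.
    move=> a; rewrite /c2 !inE eqxx /=.
    have -> : [set v; f a] :\ v = [set f a].
      apply/setP => x; rewrite !inE; case: (x =P v) => [->|] /=.
        by rewrite eq_sym (negbTE (fv a)).
      by move=> _; case: (x == f a).
    case: pickP => [x|]; first by rewrite inE => /eqP -> /=.
    by move/(_ (f a)); rewrite inE eqxx.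
  have c2n : forall x y, x != v -> y != v -> c2 [set x; y] = c' [set x; y].
    by move=> x y hx hy; rewrite /c2 !inE eq_sym (negbTE hx) eq_sym (negbTE hy).
  have [i [S [_ hS hSe]]] := harr c2.
  have vS : v \in S.
    apply: contraT => vS; exfalso; apply: (hc' i S); split.
    * by apply/subsetP => x hx; rewrite inE; apply: contraNneq vS => <-.
    * by [].
    * move=> x y hx hy hxy; have [he hc] := hSe x y hx hy hxy.
      have hxv : x != v by apply: contraNneq vS => <-.
      have hyv : y != v by apply: contraNneq vS => <-.
      by rewrite /E' hxv hyv he -c2n.
  pose S' := [set a | f a \in S :\ v].
  have himg : f @: S' = S :\ v.
    apply/eqP; rewrite eqEsubset; apply/andP; split.
      by apply/subsetP => x /imsetP[a]; rewrite inE => ha ->.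
    apply/subsetP => x hx.
    have hxN : x \in N.
      move: hx; rewrite !inE => /andP[hxv hxS].
      by have [] := hSe v x vS hxS; rewrite 1?eq_sym ?inE.
    apply/imsetP; exists (enum_rank_in hxN x); last by rewrite /f enum_rankK_in.
    by rewrite inE /f enum_rankK_in.
  exists i, S'; split.
  + apply/eqP; rewrite -(eqn_add2r 1) !addn1 -hS -(card_imset _ finj) himg.
    by rewrite (cardsD1 v S) vS.
  + move=> a; rewrite !inE => /andP[_ ha].
    have hne : v != f a by rewrite eq_sym fv.
    have [_ hc] := hSe v (f a) vS ha hne.
    by rewrite -c2v.
  + move=> a b; rewrite !inE => /andP[_ ha] /andP[_ hb] hab.
    have hfab : f a != f b by apply: contra hab => /eqP /finj ->.
    have [he hc] := hSe _ _ ha hb hfab.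
    by rewrite /G he -c2n ?fv // hc eqxx.
Qed.
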